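(* Let $G$ be a finite group, let $M$ be a subgroup of $G$, and let $K$ be a normal subgroup of $G$ contained in $M$. Suppose that $G$ is a split extension of $K$ by $G/K$ (that is, $K$ has a complement in $G$). Then $M$ is a perfect code of $G$ if and only if $M/K$ is a perfect code of $G/K$.
   Context: For a group $G$ with identity $e$ and an inverse-closed subset $S\subseteq G\setminus\{e\}$, the Cayley graph $\mathrm{Cay}(G,S)$ has vertex set $G$ and edges $\{g,sg\}$ for $s\in S$, $g\in G$. A perfect code in a graph is an independent set $C$ of vertices such that every vertex outside $C$ is adjacent to exactly one vertex of $C$. A subgroup $H$ of $G$ is a perfect code of $G$ if some Cayley graph of $G$ admits $H$ as a perfect code. *)

(* Defs.v *)
From mathcomp Require Import all_boot all_fingroup.
Set Implicit Arguments. Unset Strict Implicit. Unset Printing Implicit Defensive.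
Local Open Scope group_scope.

Section PerfectCode.
Variable gT : finGroupType.

(* Adjacency in Cay(G,S): edges {g, s g} for s in S, so x ~ y iff y x^-1 \in S. *)
Definition cay_adj (S : {set gT}) (x y : gT) : bool := y * x^-1 \in S.

Definition connection_set (G S : {set gT}) : Prop :=
  S \subset G :\ 1 /\ (forall s, s \in S -> s^-1 \in S).

Definition cay_perfect_code (G S C : {set gT}) : Prop :=
  [/\ C \subset G,
      (forall x y, x \in C -> y \in C -> ~~ cay_adj S x y) &
      (forall g, g \in G :\: C -> #|[set c in C | cay_adj S g c]| = 1%N)].

Definition perfect_code_of (G H : {set gT}) : Prop :=
  exists S : {set gT}, connection_set G S /\ cay_perfect_code G S H.

End PerfectCode.

(* Main.v *)
Require Import Defs.
From mathcomp Require Import all_boot all_fingroup.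
Local Open Scope group_scope.

Lemma card1P (T : finType) (A : {set T}) (P : pred T) :
  #|[set x in A | P x]| = 1%N <->
  exists a, [/\ a \in A, P a & forall x, x \in A -> P x -> x = a].
Proof.
split.
- move/eqP/cards1P=> [a Ha].
  have: a \in [set x in A | P x] by rewrite Ha set11.
  rewrite inE => /andP[aA Pa]; exists a; split=> // x xA Px.
  by apply/set1P; rewrite -Ha inE xA.
- move=> [a [aA Pa U]]; apply/eqP/cards1P; exists a; apply/setP=> x; rewrite !inE.
  by apply/andP/eqP => [[xA Px]|->]; [exact: U | split].
Qed.

Theorem theorem4p4 (gT : finGroupType) (G M K : {group gT})
  (sMG : M \subset G) (nKG : K <| G) (sKM : K \subset M)
  (split : exists H : {group gT}, K ><| H = G) :
  perfect_code_of G M <-> perfect_code_of (G / K) (M / K).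
Proof.
have nKG' : G \subset 'N(K) by case/andP: nKG.
have nKM : K <| M := normalS sKM sMG nKG.
have nG : forall x, x \in G -> x \in 'N(K) := subsetP nKG'.
have MG : forall x, x \in M -> x \in G := subsetP sMG.
have memQ : forall x, x \in G -> (coset K x \in M / K) = (x \in M).
  move=> x xG; apply/idP/idP; last exact: mem_quotient.
  by move=> Hx; rewrite -(quotientGK nKM); apply: mem_morphpre => //; apply: nG.
split.
- case=> S [[sS invS] [_ indep cnt]].
  have SG : forall s, s \in S -> s \in G.
    by move=> s /(subsetP sS); rewrite !inE => /andP[].
  have SM : forall s, s \in S -> s \notin M.
    move=> s sS1; apply/negP=> sM; have:= indep 1 s (group1 M) sM.
    by rewrite /cay_adj invg1 mulg1 sS1.
  exists (coset K @: S); split; [split|split].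
  + apply/subsetP=> _ /imsetP[s sS1 ->]; rewrite !inE mem_quotient ?SG // andbT.
    apply/negP => /eqP e.
    have sK: s \in K by apply: coset_idr (nG _ (SG _ sS1)) e.
    by move: (SM s sS1); rewrite (subsetP sKM _ sK).
  + move=> _ /imsetP[s sS1 ->]; rewrite -morphV ?nG ?SG //; exact: (imset_f (coset K) (invS _ sS1)).
  + exact: quotientS.
  + move=> _ _ /morphimP[x nx xM ->] /morphimP[y ny yM ->]; rewrite /cay_adj.
    apply/negP => /imsetP[s sS1].
    rewrite -morphV // -morphM ?groupV // => e.
    apply: (negP (SM s sS1)). rewrite -memQ ?SG // -e mem_quotient // groupM ?groupV //.
  + move=> _ /setDP[/morphimP[g ng gG ->] ngM].
    have gM : g \notin M by rewrite -memQ.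
    have [c0 [c0M c0S U]] : exists a, [/\ a \in M, cay_adj S g a & forall x, x \in M -> cay_adj S g x -> x = a].
      by apply/card1P; apply: cnt; rewrite inE gM gG.
    apply/card1P; exists (coset K c0); split.
    * exact: mem_quotient.
    * have nc0 := nG _ (MG _ c0M); rewrite /cay_adj -morphV // -morphM ?groupV //; exact: (imset_f (coset K) (c0S : c0 * g^-1 \in S)).
    * move=> _ /morphimP[c nc cM ->] /imsetP[s sS1]; rewrite -morphV // -morphM ?groupV // => e.
      have ncg : c * g^-1 \in 'N(K) by rewrite groupM ?groupV.
      have ns := nG _ (SG _ sS1).
      have: c * g^-1 \in K :* s by apply/(rcoset_kercosetP ncg ns).
      case/rcosetP=> k kK e'.
      have kc : k^-1 * c \in M by rewrite groupM ?groupV // (subsetP sKM).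
      have := U _ kc; rewrite /cay_adj -mulgA e' mulKg => /(_ sS1) <-.
      by rewrite coset_kerl ?groupV.
- case=> Sb [[sSb invSb] [_ indep cnt]].
  case: split => H /sdprodP[_ eKH nKH tiKH].
  have sHG : H \subset G by rewrite -eKH mulG_subr.
  have HG := subsetP sHG.
  have nH : forall h, h \in H -> h \in 'N(K) := subsetP nKH.
  have SbM : forall x, x \in Sb -> x \notin M / K.
    move=> x xS; apply/negP => xM; have := indep 1 x (group1 _) xM.
    by rewrite /cay_adj invg1 mulg1 xS.
  exists [set h in H | coset K h \in Sb]; split; [split|split].
  + apply/subsetP=> h; rewrite !inE => /andP[hH hS]; rewrite HG // andbT.
    apply/negP=> /eqP h1; move: hS; rewrite h1 morph1 => /SbM; by rewrite group1.
  + move=> h; rewrite !inE => /andP[hH hS]; rewrite groupV hH morphV ?nH //; exact: invSb.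
  + by [].
  + move=> x y xM yM; rewrite /cay_adj inE; apply/negP => /andP[_].
    have nx := nG _ (MG _ xM); have ny := nG _ (MG _ yM).
    rewrite morphM ?groupV // morphV //.
    apply/negP; exact: (indep _ _ (mem_quotient K xM) (mem_quotient K yM)).
  + move=> g; rewrite inE => /andP[gM gG].
    have ng := nG _ gG.
    have [cb [cbM cbS U]] : exists a, [/\ a \in M / K, cay_adj Sb (coset K g) a
         & forall x, x \in M / K -> cay_adj Sb (coset K g) x -> x = a].
      by apply/card1P; apply: cnt; rewrite inE memQ // gM mem_quotient.
    have sbG : cb * (coset K g)^-1 \in H / K.
      rewrite -(quotientMidl K H) eKH.
      by move/(subsetP sSb): cbS; rewrite !inE => /andP[].
    case/morphimP: sbG => h0 nh0 h0H e0.
    apply/card1P; exists (h0 * g); split.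
    * rewrite -memQ; last exact: groupM (HG _ h0H) gG.
      by rewrite (morphM (coset_morphism K)) // -e0 mulgKV.
    * by rewrite /cay_adj inE mulgK h0H -e0.
    * move=> c cM; rewrite /cay_adj inE => /andP[hH hS].
      have nc := nG _ (MG _ cM).
      have ec : coset K c = cb.
        apply: U; first exact: mem_quotient.
        by rewrite /cay_adj -morphV // -morphM ?groupV.
      have e1 : coset K (c * g^-1) = coset K h0.
        by rewrite morphM ?groupV // morphV //; rewrite -e0 -ec.
      have : c * g^-1 \in K :* h0 by apply/(rcoset_kercosetP _ nh0) => //; rewrite groupM ?groupV.
      case/rcosetP=> k kK ek.
      have kH : k \in H by rewrite -(mulgK h0 k) -ek groupM ?groupV.
      have : k \in K :&: H by rewrite inE kK.
      rewrite tiKH => /set1gP k1.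
      by rewrite -(mulgKV g c) ek k1 mul1g.
Qed.
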